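(* Let $G$ be a countable infinite discrete group, $X$ an infinite compact Hausdorff space and $\alpha: G\curvearrowright X$ a continuous action such that there is no $G$-invariant regular Borel probability measure on $X$. Consider: (i) $\alpha$ has dynamical comparison; (ii) $\alpha$ has paradoxical comparison; (iii) $\alpha$ has weak paradoxical comparison. Then (i)$\Rightarrow$(ii)$\Rightarrow$(iii). If moreover $\alpha$ is minimal, then (i), (ii), (iii) are equivalent.
   Context: Subequivalence: for closed $F\subset X$ and open $O\subset X$, $F\prec O$ if there exist a finite collection $\mathcal{U}$ of open sets covering $F$ and $s_U\in G$ with the sets $s_UU$, $U\in\mathcal{U}$, pairwise disjoint subsets of $O$; for open $V$, $V\prec O$ means $F\prec O$ for every closed $F\subset V$. Dynamical comparison: $V\prec O$ for every open $V$ and nonempty open $O$ with $\mu(V)<\mu(O)$ for all $G$-invariant regular Borel probability measures $\mu$ (when there are no such measures, this means $V\prec O$ for all open $V$ and nonempty open $O$). Paradoxical comparison: for every nonempty open $O$ and closed $F\subset O$ there are disjoint nonempty open $O_1,O_2\subset O$ with $F\prec O_1$ and $F\prec O_2$. Weak paradoxical comparison: for every closed $F$ and nonempty open $O$ with $F\subset G\cdot O=\bigcup_{g\in G}gO$, one has $F\prec O$. *)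

(* Defs.v *)
From HB Require Import structures.
From mathcomp Require Import all_boot all_order all_algebra.
From mathcomp Require Import all_classical all_reals all_analysis.
From mathcomp Require Import Rstruct Rstruct_topology.
Set Implicit Arguments. Unset Strict Implicit. Unset Printing Implicit Defensive.
Import Order.TTheory GRing.Theory Num.Theory.
Local Open Scope classical_set_scope.
Local Open Scope ring_scope.

Record is_group (G : Type) (mul : G -> G -> G) (one : G) (inv : G -> G) : Prop :=
  { grp_assoc : forall a b c, mul a (mul b c) = mul (mul a b) c;
    grp_mul1g : forall a, mul one a = a;
    grp_mulVg : forall a, mul (inv a) a = one }.

Record is_action (G X : Type) (mul : G -> G -> G) (one : G) (act : G -> X -> X)
  : Prop :=
  { act1 : forall x, act one x = x;
    actM : forall g h x, act (mul g h) x = act g (act h x) }.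

Section Dyn.
Context (G : Type) (X : topologicalType) (act : G -> X -> X).

Definition borel_set (A : set X) : Prop := <<s open >> A.

Definition inv_reg_borel_prob (mu : set X -> Rdefinitions.R) : Prop :=
  [/\ mu set0 = 0,
      (forall A, borel_set A -> 0 <= mu A) /\ mu setT = 1,
      (forall F : nat -> set X, (forall n, borel_set (F n)) ->
          trivIset setT F ->
          (fun n => \sum_(i < n) mu (F i)) @ \oo --> mu (\bigcup_n F n)),
      (forall A, borel_set A ->
          (forall e : Rdefinitions.R, 0 < e -> exists U, [/\ open U, A `<=` U & mu U < mu A + e]) /\
          (forall e : Rdefinitions.R, 0 < e -> exists K, [/\ compact K, K `<=` A & mu A - e < mu K]))
    &
      (forall g A, borel_set A -> mu (act g @` A) = mu A)].

Definition subeq (F O : set X) : Prop :=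
  exists (n : nat) (U : nat -> set X) (s : nat -> G),
    [/\ forall i, (i < n)%N -> open (U i),
        F `<=` \bigcup_(i in [set i | (i < n)%N]) U i,
        forall i, (i < n)%N -> act (s i) @` U i `<=` O
      & forall i j, (i < n)%N -> (j < n)%N -> i <> j ->
          act (s i) @` U i `&` act (s j) @` U j = set0].

Definition subeq_open (V O : set X) : Prop :=
  forall F, closed F -> F `<=` V -> subeq F O.

Definition dynamical_comparison : Prop :=
  forall V O, open V -> open O -> O !=set0 ->
    (forall mu, inv_reg_borel_prob mu -> mu V < mu O) -> subeq_open V O.

Definition paradoxical_comparison : Prop :=
  forall O F, open O -> O !=set0 -> closed F -> F `<=` O ->
    exists O1 O2, [/\ open O1 /\ open O2, O1 !=set0 /\ O2 !=set0,
       O1 `<=` O /\ O2 `<=` O, O1 `&` O2 = set0 & subeq F O1 /\ subeq F O2].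

Definition orbit_set (O : set X) : set X := \bigcup_(g in [set: G]) act g @` O.

Definition weak_paradoxical_comparison : Prop :=
  forall F O, closed F -> open O -> O !=set0 -> F `<=` orbit_set O -> subeq F O.

Definition minimal_action : Prop :=
  forall x : X, closure [set act g x | g in [set: G]] = [set: X].

End Dyn.

(* Main.v *)
Require Import Defs.
From HB Require Import structures.
From mathcomp Require Import all_boot all_order all_algebra finmap.
From mathcomp Require Import all_classical all_reals all_analysis.
From mathcomp Require Import Rstruct Rstruct_topology.
Local Open Scope classical_set_scope.

Section CC.
Context (X : topologicalType) (x0 : X).
Definition pX : Type := X.
HB.instance Definition _ := Topological.copy pX X.
HB.instance Definition _ := isPointed.Build pX x0.
Lemma cc (A : set X) : compact A -> cover_compact A.
Proof. have := @compact_cover pX. move=> H. exact: (fun h => eq_ind _ (fun P => P A) h _ H). Qed.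
End CC.

Section Main.
Context (G : Type) (mul : G -> G -> G) (one : G) (inv : G -> G)
  (HG : is_group mul one inv)
  (X : topologicalType) (x0 : X) (Xhaus : hausdorff_space X) (Xcpt : compact [set: X])
  (act : G -> X -> X) (Hact : is_action mul one act)
  (Hcont : forall g, continuous (act g)).

Lemma actK g x : act (inv g) (act g x) = x.
Proof. by rewrite -(actM Hact) (grp_mulVg HG) (act1 Hact). Qed.

Lemma act_inj g : injective (act g).
Proof. by move=> x y E; rewrite -(actK g x) E actK. Qed.

Lemma open_pre g U : open U -> open (act g @^-1` U).
Proof. by move=> oU; apply: open_comp => // x _; apply: Hcont. Qed.

Lemma closed_cpt (A : set X) : closed A -> compact A.
Proof. by move=> cA; exact: (@subclosed_compact X A setT cA Xcpt). Qed.

Lemma regX {O : set X} {y : X} : open O -> O y ->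
  exists N, [/\ open N, N y & closure N `<=` O].
Proof.
move=> oO Oy.
have R := @compact_regular X y setT Xhaus Xcpt filterT.
have : filter_from (nbhs y) closure O.
  by apply: R; apply: open_nbhs_nbhs; split.
case=> B; rewrite nbhsE => -[N [oN Ny] NB] cBO.
exists N; split => //; apply: subset_trans cBO; exact: closureS.
Qed.

Definition subC (F O : set X) := exists (U : nat -> set X) (s : nat -> G),
  [/\ forall i, open (U i), F `<=` \bigcup_i U i,
      forall i, act (s i) @` U i `<=` O
    & forall i j, i <> j -> act (s i) @` U i `&` act (s j) @` U j = set0].


Lemma subeq_subC F O : subeq act F O -> subC F O.
Proof.
case=> n [U [s [oU FU sUO dU]]].
exists (fun i => if (i < n)%N then U i else set0), s; split.
- by move=> i; case: ifP => [/oU //|_]; exact: open0.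
- move=> x /FU [i /= ilt Uix]; exists i => //; by rewrite ilt.
- by move=> i; case: ifP => [/sUO //|_]; rewrite image_set0.
- move=> i j ij; case: ifP => [ilt|_]; last by rewrite image_set0 set0I.
  case: ifP => [jlt|_]; last by rewrite image_set0 setI0.
  exact: dU.
Qed.

Lemma subC_subeq F O : closed F -> subC F O -> subeq act F O.
Proof.
move=> cF [U [s [oU FU sUO dU]]].
have [D' _ FD] := @cc X x0 F (closed_cpt F cF) nat setT U (fun i _ => oU i) FU.
exists (\max_(i <- finmap.enum_fset D') i).+1, U, s; split => //.
- move=> x /FD [i /= iD Uix]; exists i => //=.
  rewrite ltnS; exact: (@leq_bigmax_seq _ _ xpredT (fun i => i)).
- by move=> i j _ _; exact: dU.
Qed.

Lemma subC_pair (I : countType) F O (U : I -> set X) (s : I -> G) :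
  (forall i, open (U i)) -> F `<=` \bigcup_i U i ->
  (forall i, act (s i) @` U i `<=` O) ->
  (forall i j, i <> j -> act (s i) @` U i `&` act (s j) @` U j = set0) ->
  subC F O.
Proof.
move=> oU FU sUO dU.
exists (fun k => if pickle_inv k is Some p then U p else set0).
exists (fun k => if pickle_inv k is Some p then s p else one); split.
- by move=> k; case: (pickle_inv k) => [p|]; [exact: oU | exact: open0].
- move=> x /FU [p _ Upx]; exists (choice.pickle p) => //=; by rewrite pickleK_inv.
- move=> k; case: (pickle_inv k) => [p|]; first exact: sUO.
  by rewrite image_set0.
- move=> k l kl.
  case Ek: (pickle_inv k) => [p|]; last by rewrite image_set0 set0I.
  case El: (pickle_inv l) => [q|]; last by rewrite image_set0 setI0.
  apply: dU => pq; apply: kl.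
  have := @pickle_invK I k; have := @pickle_invK I l.
  by rewrite Ek El /= => <- <-; rewrite pq.
Qed.

Lemma disj_contra {A B : set X} {z : X} : A `&` B = set0 -> A z -> B z -> False.
Proof. by move=> AB Az Bz; have : (A `&` B) z by []; rewrite AB. Qed.

Lemma subC_trans A B C : subC A B -> subC B C -> subC A C.
Proof.
case=> [U [s [oU AU sUB dU]]] [V [t [oV BV sVC dV]]].
apply: (@subC_pair _ A C
  (fun p : nat * nat => U p.1 `&` act (s p.1) @^-1` V p.2) (fun p => mul (t p.2) (s p.1))).
- by move=> p; apply: openI => //; exact: open_pre (oV _).
- move=> x /AU [i _ Uix].
  have /BV [j _ Vj] : B (act (s i) x) by apply: (sUB i); exists x.
  by exists (i, j).
- move=> [i j] z [y [Uy Vy] <-] /=; rewrite (actM Hact).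
  by apply: (sVC j); exists (act (s i) y).
- move=> [i j] [i' j'] ij; apply/seteqP; split => // z /=.
  move=> [[y [Uy Vy] Ey] [y' [Uy' Vy'] Ey']]; move: Ey Ey'.
  rewrite !(actM Hact) /= => Ey Ey'.
  have [jj|jj] := eqVneq j j'.
    subst j'; have ii : i <> i' by move=> ii; apply: ij; rewrite ii.
    rewrite -Ey' in Ey; move/act_inj: Ey => Ey.
    apply: (disj_contra (dU _ _ ii)); first by exists y.
    by rewrite Ey; exists y'.
  have jj' : j <> j' by apply/eqP.
  apply: (disj_contra (dV _ _ jj')); first by exists (act (s i) y).
  by rewrite Ey -Ey'; exists (act (s i') y').
Qed.

Lemma subC_single A B g : open A -> act g @` A `<=` B -> subC A B.
Proof.
move=> oA AB.
exists (fun i => if i == 0%N then A else set0), (fun _ => g); split.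
- by move=> i; case: ifP => // _; exact: open0.
- by move=> x Ax; exists 0%N.
- by move=> i; case: ifP => // _; rewrite image_set0.
- move=> i j ij; case: ifP => [/eqP i0|_]; last by rewrite image_set0 set0I.
  case: ifP => [/eqP j0|_]; last by rewrite image_set0 setI0.
  by exfalso; apply: ij; rewrite i0 j0.
Qed.


Lemma subC_union n (A P : nat -> set X) F O :
  (forall x, F x -> exists2 k, (k < n)%N & A k x) ->
  (forall k, (k < n)%N -> subC (A k) (P k)) ->
  (forall k, (k < n)%N -> P k `<=` O) ->
  (forall k l, (k < n)%N -> (l < n)%N -> k <> l -> P k `&` P l = set0) ->
  subC F O.
Proof.
move=> FA AP PO dP.
have : forall k, exists US : (nat -> set X) * (nat -> G), (k < n)%N ->
   [/\ forall i, open (US.1 i), A k `<=` \bigcup_i US.1 i,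
      forall i, act (US.2 i) @` US.1 i `<=` P k
    & forall i j, i <> j -> act (US.2 i) @` US.1 i `&` act (US.2 j) @` US.1 j = set0].
  move=> k; case: (ltnP k n) => kn; last by exists (fun _ => set0, fun _ => one).
  by have [U [s H]] := AP k kn; exists (U, s).
move=> /boolp.choice [f Hf].
apply: (@subC_pair _ F O
  (fun p : nat * nat => if (p.1 < n)%N then (f p.1).1 p.2 else set0)
  (fun p => (f p.1).2 p.2)).
- move=> [k i] /=; case: ifP => [kn|_]; last exact: open0.
  by have [+ _ _ _] := Hf k kn; apply.
- move=> x /FA [k kn Akx]; have [_ /(_ x Akx) [i _ Hi] _ _] := Hf k kn.
  by exists (k, i) => //=; rewrite kn.
- move=> [k i] /=; case: ifP => [kn|_]; last by rewrite image_set0.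
  have [_ _ H _] := Hf k kn; apply: subset_trans (PO k kn); exact: H.
- move=> [k i] [l j] /= ne; case: ifP => [kn|_]; last by rewrite image_set0 set0I.
  case: ifP => [ln|_]; last by rewrite image_set0 setI0.
  have [kl|kl] := eqVneq k l.
    subst l; have ij : i <> j by move=> ij; apply: ne; rewrite ij.
    by have [_ _ _ H] := Hf k kn; exact: H.
  have kl' : k <> l by apply/eqP.
  apply/seteqP; split => // z [Hz1 Hz2].
  have [_ _ H1 _] := Hf k kn; have [_ _ H2 _] := Hf l ln.
  exfalso; apply: (disj_contra (dP k l kn ln kl')); [exact: (H1 i z Hz1) | exact: (H2 j z Hz2)].
Qed.

Lemma subC_shrink K O : closed K -> subC K O ->
  exists K', [/\ closed K', K' `<=` O & subC K K'].
Proof.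
move=> cK [U [s [oU KU sUO dU]]].
have : forall x, exists iN : nat * set X, K x ->
    [/\ open iN.2, iN.2 x & closure iN.2 `<=` U iN.1].
  move=> x; have [Kx|nKx] := pselect (K x); last by exists (0%N, set0).
  have [i _ Uix] := KU x Kx.
  have [N [oN Nx cN]] := regX (oU i) Uix.
  by exists (i, N).
move=> /boolp.choice [f Hf].
have Kcov : K `<=` cover K (fun x => (f x).2).
  by move=> x Kx; exists x => //; have [] := Hf x Kx.
have oN : forall x, K x -> open (f x).2 by move=> x /Hf [].
have [D' D'K KD] := @cc X x0 K (closed_cpt K cK) X K _ oN Kcov.
have DK : forall x, [set` D'] x -> K x.
  by move=> x xD; move/D'K: xD; rewrite in_setE.
pose W i := \bigcup_(x in [set x | [set` D'] x /\ (f x).1 = i]) (f x).2.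
have WU : forall i, W i `<=` U i.
  move=> i w [y [yD <-] Nyw]; have [_ _ cN] := Hf y (DK y yD).
  exact: cN (subset_closure Nyw).
exists (\bigcup_(x in [set` D']) act (s (f x).1) @` closure (f x).2); split.
- apply: closed_bigcup; first exact: finite_fset.
  move=> x _; apply: compact_closed => //; apply: continuous_compact.
    exact: continuous_subspaceT.
  by apply: closed_cpt; exact: closed_closure.
- move=> z [x xD [y cy <-]].
  have [_ _ cN] := Hf x (DK x xD).
  by apply: (sUO (f x).1); exists y => //; exact: cN.
- exists W, s; split.
  + move=> i; apply: bigcup_open => x [xD _]; exact: oN (DK x xD).
  + move=> x /KD [y yD Nyx]; exists (f y).1 => //; exists y => //.
  + move=> i z [w [y [yD fyi] Nyw] <-]; exists y => //.
    by exists w; [exact: subset_closure | rewrite fyi].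
  + move=> i j ij; apply/seteqP; split => // z [[w Hw Ew] [w' Hw' Ew']].
    exfalso; apply: (disj_contra (dU i j ij)).
      by exists w => //; exact: (WU i w Hw).
    by exists w'; [exact: (WU j w' Hw') | rewrite Ew' Ew].
Qed.

Lemma multi (PC : paradoxical_comparison act) n : forall O K,
  open O -> O !=set0 -> closed K -> K `<=` O ->
  exists P : nat -> set X, [/\ forall i, P i `<=` O,
    forall i j, (i < n)%N -> (j < n)%N -> i <> j -> P i `&` P j = set0
   & forall i, (i < n)%N -> subC K (P i)].
Proof.
elim: n => [|n IH] O K oO O0 cK KO.
  by exists (fun _ => O); split => // i.
have := PC O K oO O0 cK KO.
move=> [ O1 [ O2 [[oO1 oO2] [ O10 O20] [ O1O O2O] O12 [KO1 KO2]]]].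
have [K' [cK' K'O2 KK']] := subC_shrink _ _ cK (subeq_subC _ _ KO2).
have [P' [P'O2 dP' KP']] := IH O2 K' oO2 O20 cK' K'O2.
exists (fun i => if i is i'.+1 then P' i' else O1); split.
- by case => [|i] //=; apply: subset_trans (P'O2 i) O2O.
- case=> [|i] [|j] ilt jlt ij /=.
  + by exfalso; apply: ij.
  + apply/seteqP; split => // z [ O1z Pz]; exfalso.
    by apply: (disj_contra O12 O1z); exact: P'O2 Pz.
  + apply/seteqP; split => // z [Pz O1z]; exfalso.
    by apply: (disj_contra O12 O1z); exact: P'O2 Pz.
  + by apply: dP' => // e; apply: ij; rewrite e.
- case=> [|i] /= ilt; first exact: subeq_subC.
  exact: subC_trans KK' (KP' i ilt).
Qed.


Lemma pc_wpc : paradoxical_comparison act -> weak_paradoxical_comparison act.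
Proof.
move=> PC F O cF oO O0 FO.
apply: (subC_subeq F O cF).
have : forall x, exists gN : G * set X, F x ->
    [/\ open gN.2, gN.2 (act (inv gN.1) x) & closure gN.2 `<=` O].
  move=> x; have [Fx|nFx] := pselect (F x); last by exists (one, set0).
  have [g _ [y Oy Ey]] := FO x Fx.
  have [N [oN Ny cN]] := regX oO Oy.
  by exists (g, N) => _ /=; split => //; rewrite -Ey actK.
move=> /boolp.choice [f Hf].
pose W x := act (inv (f x).1) @^-1` (f x).2.
have oW : forall x, F x -> open (W x).
  by move=> x /Hf [oN _ _]; exact: open_pre.
have Fcov : F `<=` cover F W.
  by move=> x Fx; exists x => //; have [] := Hf x Fx.
have [D' D'F FD] := @cc X x0 F (closed_cpt F cF) X F W oW Fcov.
have DF : forall x, x \in D' -> F x.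
  by move=> x xD; move/D'F: xD; rewrite in_setE.
pose sq := finmap.enum_fset D'.
pose K := \bigcup_(x in [set` D']) closure (f x).2.
have cK : closed K.
  apply: closed_bigcup; first exact: finite_fset.
  by move=> x _; exact: closed_closure.
have KO : K `<=` O.
  move=> z [x xD]; have [_ _ cN] := Hf x (DF x xD); exact: cN.
have [P [PO dP KP]] := multi PC (size sq) O K oO O0 cK KO.
apply: (@subC_union (size sq) (fun k => W (nth x0 sq k)) P).
- move=> x /FD [y yD Wyx]; exists (index y sq); first by rewrite index_mem.
  by rewrite nth_index.
- move=> k klt; apply: subC_trans (KP k klt).
  have yD : nth x0 sq k \in D' := mem_nth x0 klt.
  apply: (@subC_single _ _ (inv (f (nth x0 sq k)).1)); first exact: oW (DF _ yD).
  move=> z [w Ww <-]; exists (nth x0 sq k) => //; exact: subset_closure.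
- by move=> k _; exact: PO.
- by move=> k l kn ln kl; exact: dP.
Qed.

Lemma dc_pc (Xinf : ~ finite_set [set: X])
  (Hnomeas : forall mu : set X -> Rdefinitions.R, ~ inv_reg_borel_prob act mu) :
  dynamical_comparison act -> paradoxical_comparison act.
Proof.
move=> DC O F oO [x Ox] cF FO.
have DCa : forall V O, open V -> open O -> O !=set0 -> subeq_open act V O.
  by move=> V O' oV oO' O0; apply: DC => // mu /Hnomeas.
have [y [Oy yx]] : exists y, O y /\ y <> x.
  apply: contrapT => H; apply: Xinf.
  have Ox1 : forall y, O y -> y = x.
    by move=> y Oy; apply: contrapT => yx; apply: H; exists y.
  have [n [U [s [oU XU sUO dU]]]] :=
    DCa setT O openT oO (ex_intro _ x Ox) setT closedT (@subset_refl _ _).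
  suff -> : [set: X] = [set x] by exact: finite_set1.
  apply/seteqP; split => // a _ /=.
  have [i ilt Ua] := XU a I; have [j jlt Ux] := XU x I.
  have ea : act (s i) a = x by apply: Ox1; apply: (sUO i ilt); exists a.
  have ex : act (s j) x = x by apply: Ox1; apply: (sUO j jlt); exists x.
  have [ij|ij] := eqVneq i j.
    by subst j; apply: (@act_inj (s i)); rewrite ea ex.
  have ij' : i <> j by apply/eqP.
  exfalso; apply: (disj_contra (dU i j ilt jlt ij')).
    by exists a.
  by exists x => //; rewrite ea ex.
have xy : x != y by apply/eqP => e; apply: yx; rewrite e.
move: Xhaus; rewrite open_hausdorff => /(_ x y xy) [[A B] /= [xA yB] [oA oB AB0]].
move: xA yB AB0; rewrite !in_setE => xA yB AB0.
exists (A `&` O), (B `&` O); split.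
- by split; apply: openI.
- by split; [exists x | exists y].
- by split => z [].
- apply/seteqP; split => // z [[Az _] [Bz _]].
  by have : (A `&` B) z by []; rewrite AB0.
- split.
    apply: (DCa setT _ openT (openI oA oO) _ F cF (subsetT F)).
    by exists x.
  apply: (DCa setT _ openT (openI oB oO) _ F cF (subsetT F)).
  by exists y.
Qed.

Lemma wpc_dc (Hmin : minimal_action act) :
  weak_paradoxical_comparison act -> dynamical_comparison act.
Proof.
move=> W V O oV oO O0 _ F cF FV; apply: W => // x _.
have [z Oz] := O0.
have : closure [set act g x | g in [set: G]] z by rewrite Hmin.
move=> /(_ O); case.
  by apply: open_nbhs_nbhs; split.
move=> w [[g _ <-] Ow].
exists (inv g) => //; exists (act g x) => //; exact: actK.
Qed.

Lemma main_sec (Xinf : ~ finite_set [set: X])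
  (Hnomeas : forall mu : set X -> Rdefinitions.R, ~ inv_reg_borel_prob act mu) :
  (dynamical_comparison act -> paradoxical_comparison act) /\
  (paradoxical_comparison act -> weak_paradoxical_comparison act) /\
  (minimal_action act ->
     (dynamical_comparison act <-> paradoxical_comparison act) /\
     (paradoxical_comparison act <-> weak_paradoxical_comparison act)).
Proof.
have h1 := dc_pc Xinf Hnomeas.
split => //; split; first exact: pc_wpc.
move=> Hmin; have h3 := wpc_dc Hmin.
split; split => //.
- by move=> /pc_wpc /h3.
- exact: pc_wpc.
- by move=> /h3 /h1.
Qed.

End Main.

Theorem proposition4p6 (G : Type) (mul : G -> G -> G) (one : G) (inv : G -> G)
  (HG : is_group mul one inv)
  (Gcount : exists f : G -> nat, injective f)
  (Ginf : ~ finite_set [set: G])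
  (X : topologicalType) (Xhaus : hausdorff_space X) (Xcpt : compact [set: X])
  (Xinf : ~ finite_set [set: X])
  (act : G -> X -> X) (Hact : is_action mul one act)
  (Hcont : forall g, continuous (act g))
  (Hnomeas : forall mu : set X -> Rdefinitions.R, ~ inv_reg_borel_prob act mu) :
  (dynamical_comparison act -> paradoxical_comparison act) /\
  (paradoxical_comparison act -> weak_paradoxical_comparison act) /\
  (minimal_action act ->
     (dynamical_comparison act <-> paradoxical_comparison act) /\
     (paradoxical_comparison act <-> weak_paradoxical_comparison act)).
Proof.
have [x0 _] : exists x : X, True.
  apply: contrapT => H; apply: Xinf.
  suff -> : [set: X] = set0 by exact: finite_set0.
  by apply/seteqP; split => // x _; apply: H; exists x.
exact: (@main_sec _ _ _ _ HG _ x0 Xhaus Xcpt _ Hact Hcont Xinf Hnomeas).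
Qed.
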